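(* If $G$ is a graph with $n$ vertices and $m$ edges and $\vec{G}$ is any orientation of $G$, then $$Mo(G)\geq nm-2\sum_{(v,u)\in E(\vec{G})}\bar{n}_G(v,u).$$
   Context: All graphs are finite and simple. For a graph $G$ and an edge $uv$ of $G$, $n_G(u,v)$ denotes the number of vertices of $G$ whose distance in $G$ to $u$ is smaller than their distance to $v$, and $\bar{n}_G(v,u)=n-n_G(u,v)$, i.e. the number of vertices whose distance to $v$ is at most their distance to $u$. The Mostar index of $G$ is $Mo(G)=\sum_{uv\in E(G)}|n_G(u,v)-n_G(v,u)|$. An orientation $\vec{G}$ replaces each edge $uv$ by exactly one of the arcs $(u,v)$, $(v,u)$. *)

(* Defs.v *)
From mathcomp Require Import all_boot all_order all_algebra.
Set Implicit Arguments. Unset Strict Implicit. Unset Printing Implicit Defensive.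

Definition simple_graph (T : finType) (e : rel T) : Prop :=
  symmetric e /\ irreflexive e.

Definition has_walk (T : finType) (e : rel T) (k : nat) (x y : T) : bool :=
  [exists p : k.-tuple T, path e x p && (last x p == y)].

(* graph distance; None = infinite (different components).
   A shortest walk is a path, hence of length < #|T|. *)
Definition gdist (T : finType) (e : rel T) (x y : T) : option nat :=
  ohead [seq k <- iota 0 #|T| | has_walk e k x y].

Definition dlt (a b : option nat) : bool :=
  match a, b with
  | Some i, Some j => i < j
  | Some _, None => true
  | None, _ => false
  end.

Definition nG (T : finType) (e : rel T) (u v : T) : nat :=
  #|[set w | dlt (gdist e w u) (gdist e w v)]|.

Definition nbarG (T : finType) (e : rel T) (v u : T) : nat :=
  #|T| - nG e u v.

(* each unordered edge counted once via the ordering given by enum_rank *)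
Definition edge_once (T : finType) (e : rel T) (p : T * T) : bool :=
  e p.1 p.2 && (enum_rank p.1 < enum_rank p.2).

Definition nedges (T : finType) (e : rel T) : nat :=
  #|[set p : T * T | edge_once e p]|.

Definition mostar (T : finType) (e : rel T) : nat :=
  \sum_(p : T * T | edge_once e p) absz (Posz (nG e p.1 p.2) - Posz (nG e p.2 p.1))%R.

Definition orientation (T : finType) (e : rel T) (o : rel T) : Prop :=
  (forall u v, o u v -> e u v) /\ (forall u v, e u v -> (o u v (+) o v u)).

(* Main.v *)
Require Import Defs.
From mathcomp Require Import all_boot all_order all_algebra.
From mathcomp Require Import zify.
Import GRing.Theory Num.Theory.
Set Implicit Arguments. Unset Strict Implicit.

Lemma nG_disj (T : finType) (e : rel T) u v : nG e u v + nG e v u <= #|T|.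
Proof.
rewrite /nG -cardsUI.
set A := [set w | _]; set B := [set w | _].
have -> : A :&: B = set0.
  apply/setP=> w; rewrite !inE.
  by case: (gdist e w u) => [i|]; case: (gdist e w v) => [j|] //=; lia.
by rewrite cards0 addn0 max_card.
Qed.


Lemma term_le (T : finType) (e : rel T) u v :
  ((#|T|%:Z - 2%:Z * (nbarG e u v)%:Z) <= `|(nG e u v)%:Z - (nG e v u)%:Z|)%R.
Proof.
have H := nG_disj e u v.
rewrite /nbarG.
have Hb : nG e v u <= #|T| by lia.
rewrite -(subzn Hb).
rewrite distrC; apply: Order.POrderTheory.le_trans (ler_norm _).
move: (nG e u v) (nG e v u) #|T| H Hb => a b n H1 H2; lia.
Qed.

Lemma key (R : Type) (idx : R) (op : Monoid.com_law idx) (T : finType) (e : rel T) (o : rel T) (h : T * T -> R) :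
  simple_graph e -> orientation e o ->
  \big[op/idx]_(p : T * T | o p.1 p.2) h p =
   \big[op/idx]_(p : T * T | edge_once e p) (if o p.1 p.2 then h p else h (swap_pair p)).
Proof.
move=> [esym eirr] [oe oxor].
rewrite (bigID (fun p : T * T => enum_rank p.1 < enum_rank p.2)) /=.
rewrite [X in _ = X](bigID (fun p : T * T => o p.1 p.2)) /=.
congr (op _ _).
  apply: eq_big => [[x y]|[x y]] /=; last by case/andP=> ->.
  rewrite /edge_once /=; apply/idP/idP.
    by case/andP=> Ho ->; rewrite (oe _ _ Ho) Ho.
  by case/andP=> /andP[_ ->] ->.
rewrite (reindex_inj (can_inj swap_pairK)) /=.
apply: eq_big => [[x y]|[x y]] /=; last first.
  case/andP=> Hyx _.
  have Hexy : e x y by rewrite esym oe.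
  by have := oxor _ _ Hexy; rewrite Hyx addbT => /negbTE ->.
rewrite /edge_once /=.
have Hxy : o y x -> x != y.
  move=> Hyx; apply/eqP=> exy; subst y; by have := oe _ _ Hyx; rewrite eirr.
apply/idP/idP.
  case/andP=> Hyx Hr.
  have Hne := Hxy Hyx.
  have Hexy : e x y by rewrite esym oe.
  have Hno : ~~ o x y by have := oxor _ _ Hexy; rewrite Hyx addbT.
  rewrite Hexy Hno andbT /=.
  have : enum_rank x != enum_rank y.
    by apply: contra Hne => /eqP/enum_rank_inj ->.
  move: Hr; rewrite -leqNgt => Hr Hn; rewrite ltn_neqAle Hn Hr.
  by [].
case/andP=> /andP[Hexy Hr] Hno.
have := oxor _ _ Hexy; rewrite (negbTE Hno) /= => ->.
by rewrite -leqNgt ltnW.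
Qed.

Theorem lemma1 (T : finType) (e : rel T) (o : rel T) :
  simple_graph e -> orientation e o ->
  ((#|T| * nedges e)%:Z - 2%:Z * (\sum_(p : T * T | o p.1 p.2) nbarG e p.1 p.2)%:Z
     <= (mostar e)%:Z)%R.
Proof.
move=> sg oo.
rewrite (key _ (fun p => nbarG e p.1 p.2) sg oo).
rewrite /nedges cardsE -sum1_card big_distrr /= /mostar.
rewrite !(big_morph Posz PoszD (erefl _)) mulr_sumr -sumrB.
apply: ler_sum => [[x y]] /= Hp.
rewrite muln1 abszE.
case: (o x y) => /=.
  exact: term_le.
rewrite distrC; exact: term_le.
Qed.
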